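(* Let $\alpha: I\to M$ be a unit-speed curve on an oriented surface $M\subset E^3$ with Darboux frame $\{T,V,U\}$ and curvatures $k_g,k_n,\tau_g$. Consider the curve $\gamma$ defined in either of the following two cases: (a) $\tau_g\equiv0$, $k_g$ and $k_n$ nowhere zero, and $\gamma(s)=\alpha(s)+\frac{1}{k_n(s)}U(s)$; (b) $\tau_g$ nowhere zero, $\lambda$ an antiderivative of $k_gk_n/\tau_g$, $\Lambda$ an antiderivative of $e^{-\lambda}$, $c_9$ a real constant, $y_1=e^{\lambda}(c_9-\Lambda)$, $y_3=\frac{k_g}{\tau_g}y_1$, and $\gamma(s)=\alpha(s)+y_1(s)T(s)+y_3(s)U(s)$. In either case assume $\gamma$ is regular. Then $\gamma$ is a general helix if and only if $\alpha$ is an isophote curve on $M$.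
   Context: $M$ is an oriented surface in Euclidean 3-space $E^3$ and $\alpha:I\to M$ is a unit-speed curve with arc-length parameter $s$. Its Darboux frame $\{T,V,U\}$ consists of the unit tangent $T=\alpha'$, the unit surface normal $U$ of $M$ along $\alpha$, and $V=U\times T$; it satisfies $T'=k_gV+k_nU$, $V'=-k_gT+\tau_gU$, $U'=-k_nT-\tau_gV$, where $k_g,k_n,\tau_g$ are the geodesic curvature, normal curvature and geodesic torsion. A regular curve is a general helix if its unit tangent makes a constant angle with a fixed direction. $\alpha$ is an isophote curve if $\langle U,l\rangle$ is constant for some fixed unit vector $l$. *)

(* Defs.v *)
From Stdlib Require Import Reals.
From Coquelicot Require Import Coquelicot.
Open Scope R_scope.

Record vec3 := V3 { vx : R; vy : R; vz : R }.

Definition vadd (a b : vec3) : vec3 := V3 (vx a + vx b) (vy a + vy b) (vz a + vz b).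
Definition vscale (r : R) (a : vec3) : vec3 := V3 (r * vx a) (r * vy a) (r * vz a).
Definition vdot (a b : vec3) : R := vx a * vx b + vy a * vy b + vz a * vz b.
Definition vnorm (a : vec3) : R := sqrt (vdot a a).
Definition vcross (a b : vec3) : vec3 :=
  V3 (vy a * vz b - vz a * vy b) (vz a * vx b - vx a * vz b) (vx a * vy b - vy a * vx b).
Definition vzero : vec3 := V3 0 0 0.

Definition is_vderive (f : R -> vec3) (s : R) (f' : vec3) : Prop :=
  is_derive (fun t => vx (f t)) s (vx f') /\
  is_derive (fun t => vy (f t)) s (vy f') /\
  is_derive (fun t => vz (f t)) s (vz f').

Definition inI (a b : Rbar) (s : R) : Prop := Rbar_lt a s /\ Rbar_lt s b.

(* {T,V,U} is the Darboux frame of the unit-speed curve alpha (arc length s)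
   with geodesic curvature kg, normal curvature kn, geodesic torsion tg;
   U is the unit surface normal along alpha, V = U x T. *)
Definition darboux_frame (a b : Rbar) (alpha T V U : R -> vec3)
  (kg kn tg : R -> R) : Prop :=
  forall s, inI a b s ->
    is_vderive alpha s (T s) /\
    vdot (T s) (T s) = 1 /\ vdot (U s) (U s) = 1 /\ vdot (T s) (U s) = 0 /\
    V s = vcross (U s) (T s) /\
    is_vderive T s (vadd (vscale (kg s) (V s)) (vscale (kn s) (U s))) /\
    is_vderive V s (vadd (vscale (- kg s) (T s)) (vscale (tg s) (U s))) /\
    is_vderive U s (vadd (vscale (- kn s) (T s)) (vscale (- tg s) (V s))) /\
    ex_derive kg s /\ ex_derive kn s /\ ex_derive tg s.

Definition regular_on (a b : Rbar) (g : R -> vec3) : Prop :=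
  forall s, inI a b s -> exists v, is_vderive g s v /\ v <> vzero.

Definition general_helix (a b : Rbar) (g : R -> vec3) : Prop :=
  exists (d : vec3) (c : R), vnorm d = 1 /\
    forall s v, inI a b s -> is_vderive g s v -> vdot (vscale (/ vnorm v) v) d = c.

Definition isophote (a b : Rbar) (U : R -> vec3) : Prop :=
  exists (l : vec3) (c : R), vnorm l = 1 /\ forall s, inI a b s -> vdot (U s) l = c.

Definition case_a (a b : Rbar) (alpha T V U : R -> vec3) (kg kn tg : R -> R)
  (g : R -> vec3) : Prop :=
  forall s, inI a b s ->
    tg s = 0 /\ kg s <> 0 /\ kn s <> 0 /\
    g s = vadd (alpha s) (vscale (/ kn s) (U s)).

Definition case_b (a b : Rbar) (alpha T V U : R -> vec3) (kg kn tg : R -> R)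
  (g : R -> vec3) : Prop :=
  exists (lam Lam : R -> R) (c9 : R),
    forall s, inI a b s ->
      tg s <> 0 /\
      is_derive lam s (kg s * kn s / tg s) /\
      is_derive Lam s (exp (- lam s)) /\
      let y1 := exp (lam s) * (c9 - Lam s) in
      let y3 := kg s / tg s * y1 in
      g s = vadd (alpha s) (vadd (vscale y1 (T s)) (vscale y3 (U s))).

(* Main.v *)
Require Import Defs.
From Stdlib Require Import Reals Lra Psatz Classical.
From Coquelicot Require Import Coquelicot.
Open Scope R_scope.

Lemma dR_plus (f g : R -> R) x df dg : is_derive f x df -> is_derive g x dg ->
  is_derive (fun t => f t + g t) x (df + dg).
Proof. intros H1 H2. exact (is_derive_plus f g x df dg H1 H2). Qed.

Lemma dR_minus (f g : R -> R) x df dg : is_derive f x df -> is_derive g x dg ->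
  is_derive (fun t => f t - g t) x (df - dg).
Proof. intros H1 H2. exact (is_derive_minus f g x df dg H1 H2). Qed.

Lemma dR_opp (f : R -> R) x df : is_derive f x df ->
  is_derive (fun t => - f t) x (- df).
Proof. intros H1. exact (is_derive_opp f x df H1). Qed.

Lemma dR_const (c : R) x : is_derive (fun _ => c) x 0.
Proof. exact (is_derive_const c x). Qed.

Lemma dR_mult (f g : R -> R) x df dg : is_derive f x df -> is_derive g x dg ->
  is_derive (fun t => f t * g t) x (df * g x + f x * dg).
Proof. apply Derive.is_derive_mult. Qed.

Lemma dR_comp_exp (f : R -> R) x df : is_derive f x df ->
  is_derive (fun t => exp (f t)) x (df * exp (f x)).
Proof. intros H. exact (is_derive_comp exp f x (exp (f x)) df (is_derive_exp (f x)) H). Qed.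

Lemma is_vderive_eq f s a c : is_vderive f s a -> a = c -> is_vderive f s c.
Proof. intros H E; now subst. Qed.

Lemma vec_eq (a c : vec3) : vx a = vx c -> vy a = vy c -> vz a = vz c -> a = c.
Proof. destruct a, c; simpl; intros; subst; reflexivity. Qed.

Lemma vd_add f g s a c : is_vderive f s a -> is_vderive g s c ->
  is_vderive (fun t => vadd (f t) (g t)) s (vadd a c).
Proof.
  intros [H1 [H2 H3]] [G1 [G2 G3]]; split; [|split]; simpl; now apply dR_plus.
Qed.

Lemma vd_scale (r : R -> R) f s r' a : is_derive r s r' -> is_vderive f s a ->
  is_vderive (fun t => vscale (r t) (f t)) s (vadd (vscale r' (f s)) (vscale (r s) a)).
Proof.
  intros Hr [H1 [H2 H3]]; split; [|split]; simpl; now apply dR_mult.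
Qed.

Lemma vd_unique f s a c : is_vderive f s a -> is_vderive f s c -> a = c.
Proof.
  intros [H1 [H2 H3]] [G1 [G2 G3]]; apply vec_eq.
  - rewrite <- (is_derive_unique _ _ _ H1). now rewrite (is_derive_unique _ _ _ G1).
  - rewrite <- (is_derive_unique _ _ _ H2). now rewrite (is_derive_unique _ _ _ G2).
  - rewrite <- (is_derive_unique _ _ _ H3). now rewrite (is_derive_unique _ _ _ G3).
Qed.

Lemma vd_ext_loc f g s a : locally s (fun t => f t = g t) -> is_vderive f s a -> is_vderive g s a.
Proof.
  intros Hl [H1 [H2 H3]]; split; [|split].
  - eapply is_derive_ext_loc; [|exact H1]. eapply filter_imp; [|exact Hl]. intros t Ht; simpl; now rewrite Ht.
  - eapply is_derive_ext_loc; [|exact H2]. eapply filter_imp; [|exact Hl]. intros t Ht; simpl; now rewrite Ht.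
  - eapply is_derive_ext_loc; [|exact H3]. eapply filter_imp; [|exact Hl]. intros t Ht; simpl; now rewrite Ht.
Qed.

Lemma vd_dot f s a l : is_vderive f s a -> is_derive (fun t => vdot (f t) l) s (vdot a l).
Proof.
  intros [H1 [H2 H3]]. unfold vdot.
  apply dR_plus; [apply dR_plus|].
  - eapply is_derive_ext with (fun t => vx (f t) * vx l). reflexivity.
    replace (vx a * vx l) with (vx a * vx l + vx (f s) * 0) by ring. apply dR_mult; auto. apply dR_const.
  - eapply is_derive_ext with (fun t => vy (f t) * vy l). reflexivity.
    replace (vy a * vy l) with (vy a * vy l + vy (f s) * 0) by ring. apply dR_mult; auto. apply dR_const.
  - eapply is_derive_ext with (fun t => vz (f t) * vz l). reflexivity.
    replace (vz a * vz l) with (vz a * vz l + vz (f s) * 0) by ring. apply dR_mult; auto. apply dR_const.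
Qed.

Lemma inI_locally a b s : inI a b s -> locally s (inI a b).
Proof.
  intros H. exact (open_and _ _ (open_Rbar_gt a) (open_Rbar_lt b) s H).
Qed.

Lemma inI_conv a b s1 s2 x : inI a b s1 -> inI a b s2 -> s1 <= x <= s2 -> inI a b x.
Proof.
  unfold inI; destruct a, b; simpl; intros; lra.
Qed.

Lemma der_cont (f : R -> R) x l : is_derive f x l -> continuity_pt f x.
Proof. intros H. apply derivable_continuous_pt. exists l. now apply is_derive_Reals. Qed.

Lemma no_sign_change (h : R -> R) x y : x < y ->
  (forall z, x <= z <= y -> continuity_pt h z) -> (forall z, x <= z <= y -> h z <> 0) ->
  h x * h y > 0.
Proof.
  intros Hxy Hc Hn.
  destruct (Rlt_or_le 0 (h x * h y)) as [P|P]; [exact P|exfalso].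
  assert (hx := Hn x ltac:(lra)). assert (hy := Hn y ltac:(lra)).
  destruct (Rlt_or_le (h x) 0) as [N|N].
  - assert (0 < h y) by (destruct (Rlt_or_le 0 (h y)); nra).
    destruct (Ranalysis5.IVT_interv h x y Hc Hxy N H) as [z [Hz1 Hz2]].
    exact (Hn z Hz1 Hz2).
  - assert (h y < 0) by (destruct (Rlt_or_le (h y) 0); nra).
    assert (Hc' : forall z, x <= z <= y -> continuity_pt (fun t => - h t) z).
    { intros z Hz. apply continuity_pt_opp. now apply Hc. }
    destruct (Ranalysis5.IVT_interv (fun t => - h t) x y Hc' Hxy ltac:(lra) ltac:(lra)) as [z [Hz1 Hz2]].
    apply (Hn z Hz1). lra.
Qed.

Lemma loc_incr (G : R -> R) x y l : x < y -> is_derive G x l -> l > 0 ->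
  exists t, x < t <= y /\ G t > G x.
Proof.
  intros Hxy Hd Hl. apply is_derive_Reals in Hd.
  destruct (Hd l Hl) as [delta Hdel].
  set (h := Rmin (delta/2) (y - x)).
  assert (Hh0 : 0 < h) by (unfold h; apply Rmin_glb_lt; [destruct delta; simpl; lra | lra]).
  assert (Hh1 : h <= delta/2) by apply Rmin_l.
  assert (Hh2 : h <= y - x) by apply Rmin_r.
  assert (Hpos := cond_pos delta).
  assert (Hq := Hdel h ltac:(lra) ltac:(rewrite Rabs_right; lra)).
  apply Rabs_def2 in Hq. destruct Hq as [_ Hq].
  exists (x + h). split; [lra|].
  set (q := (G (x + h) - G x) / h) in *.
  assert (G (x + h) - G x = q * h) by (unfold q; field; lra).
  nra.
Qed.

Lemma loc_decr (G : R -> R) x y l : x < y -> is_derive G y l -> l < 0 ->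
  exists t, x <= t < y /\ G t > G y.
Proof.
  intros Hxy Hd Hl. apply is_derive_Reals in Hd.
  destruct (Hd (- l) ltac:(lra)) as [delta Hdel].
  set (h := Rmin (delta/2) (y - x)).
  assert (Hh0 : 0 < h) by (unfold h; apply Rmin_glb_lt; [destruct delta; simpl; lra | lra]).
  assert (Hh1 : h <= delta/2) by apply Rmin_l.
  assert (Hh2 : h <= y - x) by apply Rmin_r.
  assert (Hpos := cond_pos delta).
  assert (Hq := Hdel (- h) ltac:(lra) ltac:(rewrite Rabs_left; lra)).
  apply Rabs_def2 in Hq. destruct Hq as [Hq _].
  exists (y + - h). split; [lra|].
  set (q := (G (y + - h) - G y) / - h) in *.
  assert (G (y + - h) - G y = q * - h) by (unfold q; field; lra).
  nra.
Qed.

Lemma darboux_core (G : R -> R) x y : x < y -> (forall z, x <= z <= y -> ex_derive G z) ->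
  Derive G x > 0 -> Derive G y < 0 -> exists z, x < z < y /\ Derive G z = 0.
Proof.
  intros Hxy Hd Hx Hy.
  destruct (continuity_ab_maj G x y ltac:(lra)) as [M [HM1 HM2]].
  { intros c Hc. apply (der_cont G c (Derive G c)). apply Derive_correct. now apply Hd. }
  destruct (loc_incr G x y (Derive G x) Hxy (Derive_correct _ _ (Hd x ltac:(lra))) Hx) as [t [Ht1 Ht2]].
  destruct (loc_decr G x y (Derive G y) Hxy (Derive_correct _ _ (Hd y ltac:(lra))) Hy) as [u [Hu1 Hu2]].
  assert (M <> x) by (intro E; subst; assert (Hm := HM1 t ltac:(lra)); lra).
  assert (M <> y) by (intro E; subst; assert (Hm := HM1 u ltac:(lra)); lra).
  exists M. split; [lra|].
  assert (pr : derivable_pt G M).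
  { exists (Derive G M). apply is_derive_Reals. apply Derive_correct. apply Hd. lra. }
  rewrite <- (Derive_Reals G M pr).
  apply (deriv_maximum G x y M pr); try lra.
  intros z H1 H2. apply HM1. lra.
Qed.

Lemma darboux_sign (G : R -> R) x y : x < y ->
  (forall z, x <= z <= y -> ex_derive G z /\ Derive G z <> 0) ->
  Derive G x * Derive G y > 0.
Proof.
  intros Hxy Hd.
  destruct (Rlt_or_le 0 (Derive G x * Derive G y)) as [P|P]; [exact P|exfalso].
  assert (hx := proj2 (Hd x ltac:(lra))). assert (hy := proj2 (Hd y ltac:(lra))).
  destruct (Rlt_or_le 0 (Derive G x)) as [N|N].
  - assert (Derive G y < 0) by (destruct (Rlt_or_le (Derive G y) 0); nra).
    destruct (darboux_core G x y Hxy (fun z Hz => proj1 (Hd z Hz)) N H) as [z [Hz1 Hz2]].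
    apply (proj2 (Hd z ltac:(lra))). exact Hz2.
  - assert (0 < Derive G y) by (destruct (Rlt_or_le 0 (Derive G y)); nra).
    assert (Hd' : forall z, x <= z <= y -> ex_derive (fun t => - G t) z).
    { intros z Hz. exists (- Derive G z). apply dR_opp. apply Derive_correct. apply Hd; auto. }
    destruct (darboux_core (fun t => - G t) x y Hxy Hd') as [z [Hz1 Hz2]];
      rewrite ?Derive_opp; try lra.
    rewrite Derive_opp in Hz2.
    apply (proj2 (Hd z ltac:(lra))). lra.
Qed.

Lemma key (a b : Rbar) (alpha T V U : R -> vec3) (kg kn tg : R -> R) (g : R -> vec3) :
  darboux_frame a b alpha T V U kg kn tg ->
  (case_a a b alpha T V U kg kn tg g \/ case_b a b alpha T V U kg kn tg g) ->
  forall s, inI a b s -> exists w, is_vderive g s (vscale w (U s)).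
Proof.
  intros Hfr Hc s Hs.
  destruct (Hfr s Hs) as [Ha [HTT [HUU [HTU [HV [HT' [HV' [HU' [Dkg [Dkn Dtg]]]]]]]]]].
  destruct Hc as [Hc|Hc].
  - destruct (Hc s Hs) as [Htg [Hkg [Hkn Hg]]].
    destruct Dkn as [dk Hdk].
    assert (Hi := is_derive_inv kn s dk Hdk Hkn).
    assert (Hd := vd_add _ _ _ _ _ Ha (vd_scale _ _ _ _ _ Hi HU')).
    assert (Hd2 := vd_ext_loc _ g s _ ltac:(eapply filter_imp; [|exact (inI_locally _ _ _ Hs)];
        intros t Ht; symmetry; exact (proj2 (proj2 (proj2 (Hc t Ht))))) Hd).
    exists (- dk / kn s ^ 2).
    eapply is_vderive_eq; [exact Hd2|].
    apply vec_eq; simpl; rewrite Htg; field; auto.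
  - destruct Hc as [lam [Lam [c9 Hc]]].
    destruct (Hc s Hs) as [Htg [Hlam [HLam Hg]]].
    set (Y1 := fun t => exp (lam t) * (c9 - Lam t)).
    set (Y3 := fun t => kg t / tg t * Y1 t).
    assert (Hd1 : is_derive Y1 s (kg s * kn s / tg s * exp (lam s) * (c9 - Lam s) + exp (lam s) * (0 - exp (- lam s)))).
    { unfold Y1. apply (dR_mult (fun t => exp (lam t)) (fun t => c9 - Lam t)). apply dR_comp_exp; exact Hlam. apply dR_minus. apply dR_const. exact HLam. }
    destruct Dkg as [dkg Hdkg]. destruct Dtg as [dtg Hdtg].
    assert (Hd3 := dR_mult _ _ _ _ _ (is_derive_div kg tg s dkg dtg Hdkg Hdtg Htg) Hd1).
    fold Y1 in Hd3. fold Y3 in Hd3.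
    set (d3 := (_ * Y1 s + _)) in Hd3.
    assert (Hd := vd_add _ _ _ _ _ Ha (vd_add _ _ _ _ _ (vd_scale _ _ _ _ _ Hd1 HT') (vd_scale _ _ _ _ _ Hd3 HU'))).
    assert (Hd2 := vd_ext_loc _ g s _ ltac:(eapply filter_imp; [|exact (inI_locally _ _ _ Hs)];
        intros t Ht; symmetry; exact (proj2 (proj2 (proj2 (Hc t Ht))))) Hd).
    exists (Y1 s * kn s + d3).
    eapply is_vderive_eq; [exact Hd2|].
    assert (E : exp (lam s) * exp (- lam s) = 1) by (rewrite <- exp_plus; replace (lam s + - lam s) with 0 by ring; apply exp_0).
    unfold Y3, Y1.
    rewrite exp_Ropp. assert (exp (lam s) <> 0) by (apply Rgt_not_eq, exp_pos).
    apply vec_eq; simpl; field; auto.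
Qed.

Lemma unit_tan w u d : vdot u u = 1 -> w <> 0 ->
  vdot (vscale (/ vnorm (vscale w u)) (vscale w u)) d = w / Rabs w * vdot u d.
Proof.
  intros Hu Hw.
  assert (E : vnorm (vscale w u) = Rabs w).
  { unfold vnorm. rewrite <- sqrt_Rsqr_abs. f_equal. unfold Rsqr.
    unfold vdot in *; simpl. transitivity (w * w * (vx u * vx u + vy u * vy u + vz u * vz u)); [ring|].
    rewrite Hu; ring. }
  rewrite E. unfold vdot; simpl. unfold Rdiv. ring.
Qed.

Lemma sgn_sq w : w <> 0 -> (w / Rabs w) * (w / Rabs w) = 1.
Proof.
  intros Hw. destruct (Rcase_abs w).
  - rewrite Rabs_left by lra. field. lra.
  - rewrite Rabs_right by lra. field. lra.
Qed.

Lemma sgn_eq w w0 : w * w0 > 0 -> w / Rabs w = w0 / Rabs w0.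
Proof.
  intros H. destruct (Rcase_abs w); destruct (Rcase_abs w0).
  - rewrite !Rabs_left by lra. field. split; lra.
  - nra.
  - nra.
  - rewrite !Rabs_right by lra. assert (w <> 0) by nra. assert (w0 <> 0) by nra. field; auto.
Qed.

Theorem theorem3p27 (a b : Rbar) (alpha T V U : R -> vec3) (kg kn tg : R -> R)
  (g : R -> vec3) :
  Rbar_lt a b ->
  darboux_frame a b alpha T V U kg kn tg ->
  (case_a a b alpha T V U kg kn tg g \/ case_b a b alpha T V U kg kn tg g) ->
  regular_on a b g ->
  (general_helix a b g <-> isophote a b U).
Proof.
  intros Hab Hfr Hc Hreg.
  assert (Hk : forall s, inI a b s -> exists w, w <> 0 /\ is_vderive g s (vscale w (U s)) /\
     forall v, is_vderive g s v -> v = vscale w (U s)).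
  { intros s Hs. destruct (key a b alpha T V U kg kn tg g Hfr Hc s Hs) as [w Hw].
    exists w. split; [|split; [exact Hw|]].
    - intro E; subst w. destruct (Hreg s Hs) as [v [Hv Hv0]]. apply Hv0.
      rewrite (vd_unique _ _ _ _ Hv Hw). unfold vscale, vzero. f_equal; ring.
    - intros v Hv. exact (vd_unique _ _ _ _ Hv Hw). }
  assert (HUU : forall s, inI a b s -> vdot (U s) (U s) = 1).
  { intros s Hs. destruct (Hfr s Hs) as [_ [_ [H _]]]. exact H. }
  split.
  - intros [d [c [Hd Hh]]]. exists d.
    set (f := fun s => vdot (U s) d).
    assert (Hf : forall s, inI a b s -> f s * f s = c * c).
    { intros s Hs. destruct (Hk s Hs) as [w [Hw0 [Hw _]]].
      assert (E := Hh s _ Hs Hw). rewrite unit_tan in E by auto.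
      rewrite <- E. unfold f. transitivity ((w / Rabs w * (w / Rabs w)) * (vdot (U s) d * vdot (U s) d)).
      + rewrite sgn_sq by auto. ring.
      + ring. }
    assert (Hfc : forall s, inI a b s -> continuity_pt f s).
    { intros s Hs. destruct (Hfr s Hs) as [_ [_ [_ [_ [_ [_ [_ [HU' _]]]]]]]].
      exact (der_cont _ _ _ (vd_dot _ _ _ d HU')). }
    destruct (classic (exists s0, inI a b s0)) as [[s0 Hs0]|Hno].
    + exists (f s0). split; [exact Hd|]. intros s Hs. fold (f s).
      destruct (Req_dec c 0) as [Hc0|Hc0].
      { assert (A := Hf s Hs). assert (B := Hf s0 Hs0). rewrite Hc0, Rmult_0_l in A, B. apply Rmult_integral in A. apply Rmult_integral in B. unfold f in *. destruct A as [A|A]; destruct B as [B|B]; rewrite A, B; reflexivity. }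
      assert (Hnz : forall z, inI a b z -> f z <> 0).
      { intros z Hz E. assert (A := Hf z Hz). rewrite E in A. nra. }
      assert (Hprod : f s * f s0 > 0).
      { destruct (Rtotal_order s s0) as [L|[L|L]].
        - apply no_sign_change; auto.
          + intros z Hz. apply Hfc. exact (inI_conv _ _ _ _ _ Hs Hs0 Hz).
          + intros z Hz. apply Hnz. exact (inI_conv _ _ _ _ _ Hs Hs0 Hz).
        - subst. assert (A := Hnz s0 Hs0). nra.
        - rewrite Rmult_comm. apply no_sign_change; auto.
          + intros z Hz. apply Hfc. exact (inI_conv _ _ _ _ _ Hs0 Hs Hz).
          + intros z Hz. apply Hnz. exact (inI_conv _ _ _ _ _ Hs0 Hs Hz). }
      assert (A := Hf s Hs). assert (B := Hf s0 Hs0).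
      assert ((f s - f s0) * (f s + f s0) = 0) by nra.
      destruct (Rmult_integral _ _ H); nra.
    + exists 0. split; [exact Hd|]. intros s Hs. exfalso. apply Hno. now exists s.
  - intros [l [c0 [Hl Hc0]]].
    destruct (Req_dec c0 0) as [Z|Z].
    { exists l, 0. split; [exact Hl|]. intros s v Hs Hv.
      destruct (Hk s Hs) as [w [Hw0 [_ Hwu]]]. rewrite (Hwu v Hv).
      rewrite unit_tan by auto. rewrite Hc0 by auto. rewrite Z. ring. }
    set (G := fun t => vdot (g t) l).
    assert (HG : forall s, inI a b s -> exists w, w <> 0 /\ (forall v, is_vderive g s v -> v = vscale w (U s)) /\
                 ex_derive G s /\ Derive G s = w * c0).
    { intros s Hs. destruct (Hk s Hs) as [w [Hw0 [Hw Hwu]]]. exists w. split; [auto|split; [auto|]].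
      assert (D := vd_dot _ _ _ l Hw).
      split; [eexists; exact D|]. replace (Derive G s) with (vdot (vscale w (U s)) l) by (symmetry; apply is_derive_unique; exact D).
      rewrite <- (Hc0 s Hs). unfold vdot; simpl; ring. }
    destruct (classic (exists s0, inI a b s0)) as [[s0 Hs0]|Hno].
    + destruct (HG s0 Hs0) as [w0 [Hw00 [_ [_ DG0]]]].
      exists l, (w0 / Rabs w0 * c0). split; [exact Hl|]. intros s v Hs Hv.
      destruct (HG s Hs) as [w [Hw0 [Hwu [_ DG]]]]. rewrite (Hwu v Hv).
      rewrite unit_tan by auto. rewrite (Hc0 s Hs).
      assert (Hne : forall z, inI a b z -> ex_derive G z /\ Derive G z <> 0).
      { intros z Hz. destruct (HG z Hz) as [wz [Hwz [_ [E D]]]]. split; auto. rewrite D.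
        apply Rmult_integral_contrapositive; auto. }
      assert (Hprod : w * w0 > 0).
      { assert (P : Derive G s * Derive G s0 > 0).
        { destruct (Rtotal_order s s0) as [L|[L|L]].
          - apply darboux_sign; auto. intros z Hz. apply Hne. exact (inI_conv _ _ _ _ _ Hs Hs0 Hz).
          - subst. assert (A := proj2 (Hne s0 Hs0)). nra.
          - rewrite Rmult_comm. apply darboux_sign; auto. intros z Hz. apply Hne. exact (inI_conv _ _ _ _ _ Hs0 Hs Hz). }
        rewrite DG, DG0 in P. assert (0 < c0 * c0) by nra. nra. }
      rewrite (sgn_eq w w0 Hprod). reflexivity.
    + exists l, 0. split; [exact Hl|]. intros s v Hs. exfalso. apply Hno. now exists s.
Qed.
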